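(* For an integer $i\ge 0$ let $i_0i_1i_2\dots$ be its base-3 digits, least significant first, with $i=\sum_{j\ge0}i_j3^j$ (the sequence ends in infinitely many $0$'s). Call $i$ a 2-before-0 number if the first digit in this sequence that is different from $1$ equals $2$, and a 0-before-2 number otherwise. Define $x_i=1$ if $i$ is a 0-before-2 number and $x_i=-1$ if $i$ is a 2-before-0 number. Then the sequence $x_0,x_1,x_2,\dots$ equals $w_\alpha$ (term by term, indexing $w_\alpha$ from $0$).
   Context: $w_\alpha=\lim_{n\to\infty}\phi^n(1)$, where $\phi$ is the monoid endomorphism of $\{1,-1\}^*$ determined by $\phi(1)=1\,1\,(-1)$ and $\phi(-1)=1\,(-1)\,(-1)$. *)

(* Defs.v *)
From mathcomp Require Import all_boot all_order all_algebra.
From mathcomp Require Import boolp.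
Set Implicit Arguments. Unset Strict Implicit. Unset Printing Implicit Defensive.
Import GRing.Theory Num.Theory.
Local Open Scope ring_scope.

(* Letters of the alphabet {1,-1} are represented as integers 1 and -1. *)
Definition phi_letter (a : int) : seq int :=
  if a == 1 then [:: 1; 1; -1] else [:: 1; -1; -1].

Definition phi (w : seq int) : seq int := flatten (map phi_letter w).

Definition phi_iter (n : nat) : seq int := iter n phi [:: 1].

(* w_alpha = lim phi^n(1) converges to the infinite word x : nat -> int
   (prefix topology): every position k is eventually defined and fixed. *)
Definition is_w_alpha (x : nat -> int) : Prop :=
  forall k : nat, exists N : nat, forall n : nat, (N <= n)%N ->
    (k < size (phi_iter n))%N /\ nth 0 (phi_iter n) k = x k.

Definition digit3 (i j : nat) : nat := ((i %/ 3 ^ j) %% 3)%N.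

Definition two_before_zero (i : nat) : Prop :=
  exists j : nat, digit3 i j = 2%N /\ forall k : nat, (k < j)%N -> digit3 i k = 1%N.

Definition x_seq (i : nat) : int :=
  if `[< two_before_zero i >] then -1 else 1.

(* Main.v *)
Require Import Defs.
From mathcomp Require Import all_boot all_order all_algebra boolp.

Import GRing.Theory.

Lemma size_phi (w : seq int) : size (phi w) = (3 * size w)%N.
Proof.
elim: w => [|a w IH] //=; rewrite /phi /= size_cat -/(phi w) IH.
rewrite /phi_letter; case: ifP => _ /=; rewrite mulnS //.
Qed.

Lemma nth_phi (w : seq int) q r : (r < 3)%N -> (q < size w)%N ->
  nth 0%R (phi w) (3 * q + r) = nth 0%R (phi_letter (nth 0%R w q)) r.
Proof.
move=> hr; elim: w q => [|a w IH] q //= hq.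
rewrite /phi /= -/(phi w) nth_cat.
have s3 : size (phi_letter a) = 3%N by rewrite /phi_letter; case: ifP.
rewrite s3; case: q hq => [|q] hq.
  by rewrite muln0 add0n hr.
have -> : (3 * q.+1 + r < 3)%N = false by rewrite mulnS; apply/negbTE; rewrite -leqNgt leq_addr.
have -> : (3 * q.+1 + r - 3 = 3 * q + r)%N by rewrite mulnS -addnA addKn.
by apply: IH.
Qed.

Lemma digit3_0 q r : (r < 3)%N -> digit3 (3 * q + r) 0 = r.
Proof.
move=> hr; rewrite /digit3 expn0 divn1 mulnC modnMDl modn_small //.
Qed.

Lemma digit3_S q r j : (r < 3)%N -> digit3 (3 * q + r) j.+1 = digit3 q j.
Proof.
move=> hr; rewrite /digit3 expnS divnMA [(3 * q)%N]mulnC divnMDl // (divn_small hr) addn0 // .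
Qed.

Lemma tbz0 q : ~ two_before_zero (3 * q + 0).
Proof.
case=> [[|j]] [H1 H2].
  by move: H1; rewrite digit3_0.
by move: (H2 0%N (ltn0Sn _)); rewrite digit3_0.
Qed.

Lemma tbz2 q : two_before_zero (3 * q + 2).
Proof. by exists 0%N; split; [rewrite digit3_0|]. Qed.

Lemma tbz1 q : two_before_zero (3 * q + 1) <-> two_before_zero q.
Proof.
split.
  case=> [[|j]] [H1 H2].
    by move: H1; rewrite digit3_0.
  exists j; split; first by rewrite -(@digit3_S q 1).
  by move=> k hk; rewrite -(@digit3_S q 1) //; apply: H2.
case=> j [H1 H2]; exists j.+1; split; first by rewrite digit3_S.
case=> [|k] hk; first by rewrite digit3_0.
by rewrite digit3_S //; apply: H2.
Qed.

Lemma x_seq_step q r : (r < 3)%N ->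
  x_seq (3 * q + r) = nth 0%R (phi_letter (x_seq q)) r.
Proof.
rewrite /x_seq /phi_letter.
case: r => [|[|[|r]]] // _.
- by case: asboolP => [/tbz0|] //; case: asboolP => _ /=.
- case: asboolP => [/tbz1 h|h]; case: asboolP => // h'.
  by exfalso; apply: h; apply/tbz1.
- by case: asboolP => [_|/(_ (tbz2 q))] //; case: asboolP.
Qed.

Lemma phi_iter_spec n : size (phi_iter n) = (3 ^ n)%N /\
  forall k, (k < 3 ^ n)%N -> nth 0%R (phi_iter n) k = x_seq k.
Proof.
elim: n => [|n [Hs Hn]].
  split=> // [[|k]] // _; rewrite /x_seq; case: asboolP => // /(tbz0 0).
  done.
have E : phi_iter n.+1 = phi (phi_iter n) by [].
split; first by rewrite E size_phi Hs expnS.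
move=> k hk; rewrite E (divn_eq k 3) mulnC.
have hr : (k %% 3 < 3)%N by rewrite ltn_mod.
have hq : (k %/ 3 < size (phi_iter n))%N.
  by rewrite Hs ltn_divLR // -expnSr.
rewrite nth_phi // x_seq_step // Hn //; by rewrite -Hs.
Qed.

Lemma ltn_pow3 k : (k < 3 ^ k)%N.
Proof.
elim: k => // k IH; rewrite expnS.
apply: (leq_ltn_trans IH); rewrite -[X in (X < _)%N]mul1n ltn_pmul2r //.
by rewrite expn_gt0.
Qed.

Theorem mainTheorem4 : is_w_alpha x_seq.
Proof.
move=> k; exists k => n hn.
have [Hs Hn] := phi_iter_spec n.
have hk : (k < 3 ^ n)%N.
  by apply: (leq_trans (ltn_pow3 k)); rewrite leq_exp2l.
by rewrite Hs; split => //; apply: Hn.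
Qed.
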